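(* Assume the setting in the context. Let $U\in C^1([0,T];X)$ with $U(t)\in D(d)\cap D(d^\star)$ and $\partial_tU(t)=J(d+d^\star)U(t)$ for all $t\in[0,T]$, and let $\hat U_h^N\in\mathcal{H}_h$ satisfy $$\mathcal{L}_h\big((\mathrm{Id}-P_{\mathfrak{H}})\hat U_h^N,V_h\big)=\big((\mathrm{Id}-P_{\mathfrak{H}})I_h\mathcal{T}^NU,V_h\big)_h\ \ \forall V_h\in\mathcal{H}_h,\qquad P_{\mathfrak{H}}\hat U_h^N=I_hP_{\mathfrak{H}}U(t_N).$$ Let $C_L>0$ be a constant such that $\sup_{W_h\in\mathfrak{H}_h^{\perp_h},W_h\ne0}\mathcal{L}_h(V_h,W_h)/\|W_h\|_{1,h}\ge C_L\|V_h\|_{1,h}$ for all $V_h\in\mathfrak{H}_h^{\perp_h}$. Then $$\big\|(\mathrm{Id}-P_{\mathfrak{H}})\big(I_hU(T)-\hat U_h^N\big)\big\|_{1,h}\le\frac{1}{C_L}\Big(\|\epsilon_h(U(T),\cdot)\|_{1,h}^{\ast}+\|I_h\epsilon_{\Delta t,N}(U)\|_h\Big).$$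
   Context: Continuous setting: $\Omega\subset\mathbb{R}^3$ a domain, $X:=L^2(\Omega;\mathbb{R}^3)\oplus L^2(\Omega;\mathbb{T})\oplus L^2(\Omega;\mathbb{S})\oplus L^2(\Omega;\mathbb{R})$ ($\mathbb{T}$ trace-free, $\mathbb{S}$ symmetric $3\times3$ matrices) with $L^2$ inner product; $d(u_0,u_1,u_2,u_3)=(0,\operatorname{dev}\operatorname{grad}u_0,\operatorname{sym}\operatorname{curl}u_1,\operatorname{div}\operatorname{div}u_2)$ on its natural domain $D(d)$ (the components of the $L^2$ spaces whose image is in $L^2$), $d^\star$ its Hilbert adjoint; $J=\operatorname{diag}(1,-1,1,-1)$. $P_{\mathfrak{H}}$ is the orthogonal projection onto the continuous harmonic forms $\operatorname{Ker}d\cap\operatorname{Ker}d^\star$. Time grid $0=t_0<\dots<t_N=T$; $\mathcal{T}^N$ is a linear map sending sequences $(v^m)_{0\le m\le N}$ in $X$ to $X$, and $\mathcal{T}^NU:=\mathcal{T}^N((U(t_m))_m)$; $\epsilon_{\Delta t,N}(U):=\mathcal{T}^NU-\partial_tU(t_N)$. Discrete setting: finite-dimensional inner product spaces $(\mathcal{H}^i_h,(\cdot,\cdot)_h)$, $i=0,\dots,3$, with linear $d_h:\mathcal{H}^i_h\to\mathcal{H}^{i+1}_h$, $d_h\circ d_h=0$; $\mathcal{H}_h=\prod_i\mathcal{H}^i_h$ with $(V,W)_h=\sum_i(v_i,w_i)_h$, $d_h(v_0,\dots,v_3)=(0,d_hv_0,d_hv_1,d_hv_2)$, graph norm $\|V\|_{1,h}=\|V\|_h+\|d_hV\|_h$;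 $\mathcal{L}_h(V,W):=(Jd_hV,W)_h-(V,Jd_hW)_h$. Linear interpolators $I_h^i$ from (subspaces of) the $i$-th component of $X$ to $\mathcal{H}^i_h$, $I_h:=\operatorname{diag}(I_h^i)$, satisfying the cochain property $d_hI_h^i=I_h^{i+1}d$ ($0\le i<3$); all interpolants appearing are assumed defined. The discrete harmonic forms are $\mathfrak{H}_h=\operatorname{Ker}d_h\cap\operatorname{Ker}d_h^\ast$ ($d_h^\ast$ the $(\cdot,\cdot)_h$-adjoint), with orthogonal projector also denoted $P_{\mathfrak{H}}$ when acting on $\mathcal{H}_h$, and $\perp_h$ denotes orthogonal complement. For $V\in D(d^\star)$ and $W_h\in\mathcal{H}_h$, $\epsilon_h(V,W_h):=(I_hV,d_hW_h)_h-(I_hd^\star V,W_h)_h$, and $\|\ell\|_{1,h}^\ast:=\sup_{W_h\neq0}|\ell(W_h)|/\|W_h\|_{1,h}$ for a linear functional $\ell$ on $\mathcal{H}_h$. *)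

(* Defs.v *)
From HB Require Import structures.
From mathcomp Require Import all_boot all_order all_algebra.
From mathcomp Require Import all_classical all_reals all_analysis.
Set Implicit Arguments. Unset Strict Implicit. Unset Printing Implicit Defensive.
Import Order.TTheory GRing.Theory Num.Theory.
Import numFieldNormedType.Exports.
Local Open Scope classical_set_scope.
Local Open Scope ring_scope.

Section Defs.
Context (R : realType).

Record is_inner (V : lmodType R) (ip : V -> V -> R) : Prop := {
  ip_sym : forall x y, ip x y = ip y x;
  ip_linl : forall a x y z, ip (a *: x + y) z = a * ip x z + ip y z;
  ip_pos : forall x, x != 0 -> 0 < ip x x }.

Record subspace_lin (V W : lmodType R) (D : set V) (f : V -> W) : Prop := {
  sl0 : D 0;
  slD : forall a x y, D x -> D y -> D (a *: x + y);
  slL : forall a x y, D x -> D y -> f (a *: x + y) = a *: f x + f y }.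

(* The abstract setting: continuous Hilbert complex
   X0 -d0-> X1 -d1-> X2 -d2-> X3 (closed densely defined operators on their
   natural domains D_i), discrete complex H0 -dh0-> H1 -dh1-> H2 -dh2-> H3
   of finite-dimensional inner product spaces, and interpolators
   I_i : (DI_i subset X_i) -> H_i with the cochain property. *)
Record setting := {
  X0 : completeNormedModType R; X1 : completeNormedModType R;
  X2 : completeNormedModType R; X3 : completeNormedModType R;
  ip0 : X0 -> X0 -> R; ip1 : X1 -> X1 -> R; ip2 : X2 -> X2 -> R; ip3 : X3 -> X3 -> R;
  ip0_inner : is_inner ip0; ip1_inner : is_inner ip1;
  ip2_inner : is_inner ip2; ip3_inner : is_inner ip3;
  ip0_norm : forall x : X0, `|x| = Num.sqrt (ip0 x x);
  ip1_norm : forall x : X1, `|x| = Num.sqrt (ip1 x x);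
  ip2_norm : forall x : X2, `|x| = Num.sqrt (ip2 x x);
  ip3_norm : forall x : X3, `|x| = Num.sqrt (ip3 x x);
  D0 : set X0; D1 : set X1; D2 : set X2;
  d0 : X0 -> X1; d1 : X1 -> X2; d2 : X2 -> X3;
  d0_lin : subspace_lin D0 d0; d1_lin : subspace_lin D1 d1; d2_lin : subspace_lin D2 d2;
  D0_dense : closure D0 = setT; D1_dense : closure D1 = setT; D2_dense : closure D2 = setT;
  d0_closed : closed [set p : X0 * X1 | D0 p.1 /\ p.2 = d0 p.1];
  d1_closed : closed [set p : X1 * X2 | D1 p.1 /\ p.2 = d1 p.1];
  d2_closed : closed [set p : X2 * X3 | D2 p.1 /\ p.2 = d2 p.1];
  d01 : forall u, D0 u -> D1 (d0 u) /\ d1 (d0 u) = 0;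
  d12 : forall u, D1 u -> D2 (d1 u) /\ d2 (d1 u) = 0;
  H0 : vectType R; H1 : vectType R; H2 : vectType R; H3 : vectType R;
  iph0 : H0 -> H0 -> R; iph1 : H1 -> H1 -> R; iph2 : H2 -> H2 -> R; iph3 : H3 -> H3 -> R;
  iph0_inner : is_inner iph0; iph1_inner : is_inner iph1;
  iph2_inner : is_inner iph2; iph3_inner : is_inner iph3;
  dh0 : {linear H0 -> H1}; dh1 : {linear H1 -> H2}; dh2 : {linear H2 -> H3};
  dh01 : forall v, dh1 (dh0 v) = 0;
  dh12 : forall v, dh2 (dh1 v) = 0;
  DI0 : set X0; DI1 : set X1; DI2 : set X2; DI3 : set X3;
  I0 : X0 -> H0; I1 : X1 -> H1; I2 : X2 -> H2; I3 : X3 -> H3;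
  I0_lin : subspace_lin DI0 I0; I1_lin : subspace_lin DI1 I1;
  I2_lin : subspace_lin DI2 I2; I3_lin : subspace_lin DI3 I3;
  coch0 : forall u, D0 u -> DI0 u -> DI1 (d0 u) -> dh0 (I0 u) = I1 (d0 u);
  coch1 : forall u, D1 u -> DI1 u -> DI2 (d1 u) -> dh1 (I1 u) = I2 (d1 u);
  coch2 : forall u, D2 u -> DI2 u -> DI3 (d2 u) -> dh2 (I2 u) = I3 (d2 u) }.

Variable S : setting.

(* X = X0 + X1 + X2 + X3 and H_h = H0 x H1 x H2 x H3 ; (a,b,c,d) = (((a,b),c),d) *)
Definition Xsp := (X0 S * X1 S * X2 S * X3 S)%type.
Definition Hsp := (H0 S * H1 S * H2 S * H3 S)%type.

Definition ipX (u v : Xsp) : R :=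
  ip0 u.1.1.1 v.1.1.1 + ip1 u.1.1.2 v.1.1.2 + ip2 u.1.2 v.1.2 + ip3 u.2 v.2.

Definition dX (u : Xsp) : Xsp := (0, d0 u.1.1.1, d1 u.1.1.2, d2 u.1.2).
Definition DdX : set Xsp := [set u | D0 u.1.1.1 /\ D1 u.1.1.2 /\ D2 u.1.2].

Definition adj_rel (V Z : Xsp) : Prop := forall W, DdX W -> ipX V (dX W) = ipX Z W.
Definition DdstarX : set Xsp := [set V | exists Z, adj_rel V Z].
Definition dstarX (V : Xsp) : Xsp := xget 0 [set Z | adj_rel V Z].

Definition HarmX : set Xsp :=
  [set V | DdX V /\ dX V = 0 /\ DdstarX V /\ dstarX V = 0].
Definition is_PH_X (P : Xsp -> Xsp) : Prop :=
  forall V, HarmX (P V) /\ (forall W, HarmX W -> ipX (V - P V) W = 0).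

Definition iph (v w : Hsp) : R :=
  iph0 v.1.1.1 w.1.1.1 + iph1 v.1.1.2 w.1.1.2 + iph2 v.1.2 w.1.2 + iph3 v.2 w.2.
Definition dh (v : Hsp) : Hsp := (0, dh0 S v.1.1.1, dh1 S v.1.1.2, dh2 S v.1.2).
Definition normh (v : Hsp) : R := Num.sqrt (iph v v).
Definition norm1h (v : Hsp) : R := normh v + normh (dh v).

(* Ker d_h^* : d_h^* V = 0, i.e. (V, d_h W)_h = (0, W)_h for all W *)
Definition Harm_h : set Hsp := [set V | dh V = 0 /\ forall W, iph V (dh W) = 0].
Definition is_PH_h (P : Hsp -> Hsp) : Prop :=
  forall V, Harm_h (P V) /\ (forall W, Harm_h W -> iph (V - P V) W = 0).
Definition perp_h : set Hsp := [set W | forall V, Harm_h V -> iph V W = 0].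

End Defs.

Definition Jop (A B C D : zmodType) (v : (A * B * C * D)%type) : (A * B * C * D)%type :=
  (v.1.1.1, - v.1.1.2, v.1.2, - v.2).

Section Defs2.
Context (R : realType) (S : setting R).

Definition Lh (V W : Hsp S) : R := iph (Jop (dh V)) W - iph V (Jop (dh W)).

Definition Ih (u : Xsp S) : Hsp S :=
  (I0 u.1.1.1, I1 u.1.1.2, I2 u.1.2, I3 u.2).
Definition DIh : set (Xsp S) :=
  [set u | DI0 u.1.1.1 /\ DI1 u.1.1.2 /\ DI2 u.1.2 /\ DI3 u.2].

Definition eps_h (V : Xsp S) (W : Hsp S) : R :=
  iph (Ih V) (dh W) - iph (Ih (dstarX V)) W.

Definition dualnorm (l : Hsp S -> R) : R :=
  sup [set `|l W| / norm1h W | W in [set W : Hsp S | W != 0]].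
End Defs2.

Definition C1_on (R : realType) (V : normedModType R) (T : R) (U U' : R -> V) : Prop :=
  (forall s, s \in `[0, T] ->
     (fun h => h^-1 *: (U (s + h) - U s)) @ within [set h | s + h \in `[0, T]] (dnbhs (0:R))
       --> U' s)
  /\ {within `[0, T], continuous U'}.

(* Main.v *)
Require Import Defs.
From HB Require Import structures.
From mathcomp Require Import all_boot all_order all_algebra.
From mathcomp Require Import all_classical all_reals all_analysis.
From mathcomp Require Import ring lra.
Import Order.TTheory GRing.Theory Num.Theory.
Import numFieldNormedType.Exports.
Local Open Scope classical_set_scope.
Local Open Scope ring_scope.
Set Implicit Arguments. Unset Strict Implicit. Unset Printing Implicit Defensive.
Section Inner.
Variables (R : realType) (V : lmodType R) (ip : V -> V -> R) (h : is_inner ip).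

Lemma ip0l x : ip 0 x = 0.
Proof. have := ip_linl h 1 0 0 x; rewrite scale1r addr0 mul1r => e; lra. Qed.
Lemma ip0r x : ip x 0 = 0.
Proof. by rewrite (ip_sym h) ip0l. Qed.
Lemma ipDl x y z : ip (x + y) z = ip x z + ip y z.
Proof. by have := ip_linl h 1 x y z; rewrite scale1r mul1r. Qed.
Lemma ipZl a x z : ip (a *: x) z = a * ip x z.
Proof. by have := ip_linl h a x 0 z; rewrite addr0 ip0l addr0. Qed.
Lemma ipNl x z : ip (- x) z = - ip x z.
Proof. by rewrite -scaleN1r ipZl mulN1r. Qed.
Lemma ipBl x y z : ip (x - y) z = ip x z - ip y z.
Proof. by rewrite ipDl ipNl. Qed.
Lemma ipDr x y z : ip z (x + y) = ip z x + ip z y.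
Proof. by rewrite !(ip_sym h z) ipDl. Qed.
Lemma ipNr x z : ip z (- x) = - ip z x.
Proof. by rewrite !(ip_sym h z) ipNl. Qed.
Lemma ipBr x y z : ip z (x - y) = ip z x - ip z y.
Proof. by rewrite ipDr ipNr. Qed.
Lemma ipZr a x z : ip z (a *: x) = a * ip z x.
Proof. by rewrite !(ip_sym h z) ipZl. Qed.
Lemma ip_ge0 x : 0 <= ip x x.
Proof. by case: (eqVneq x 0) => [->|/(ip_pos h)/ltW //]; rewrite ip0l. Qed.

Lemma ip_CS2 x y : ip x y ^+ 2 <= ip x x * ip y y.
Proof.
case: (eqVneq y 0) => [->|ny]; first by rewrite ip0r expr2 mul0r ip0l mulr0.
have bpos := ip_pos h ny.
have := ip_ge0 (ip y y *: x - ip x y *: y).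
rewrite ipBl !ipBr !ipZl !ipZr (ip_sym h y x) => H.
have a0 := ip_ge0 x.
nra.
Qed.

Lemma ip_CS x y : `|ip x y| <= Num.sqrt (ip x x) * Num.sqrt (ip y y).
Proof.
rewrite -sqrtrM ?ip_ge0 // -sqrtr_sqr ler_sqrt ?ip_CS2 //.
by rewrite mulr_ge0 ?ip_ge0.
Qed.
End Inner.
Section Lin.
Variables (R : realType) (V W : lmodType R) (D : set V) (f : V -> W) (h : subspace_lin D f).
Lemma sl_f0 : f 0 = 0.
Proof. have := slL h 1 (sl0 h) (sl0 h); rewrite !scale1r addr0 => e.
by apply: (@addrI _ (f 0)); rewrite addr0 -e. Qed.
Lemma slDD x y : D x -> D y -> D (x + y).
Proof. by move=> hx hy; have := slD h 1 hx hy; rewrite scale1r. Qed.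
Lemma slND x : D x -> D (- x).
Proof. by move=> hx; have := slD h (-1) hx (sl0 h); rewrite addr0 scaleN1r. Qed.
Lemma slfD x y : D x -> D y -> f (x + y) = f x + f y.
Proof. by move=> hx hy; have := slL h 1 hx hy; rewrite !scale1r. Qed.
Lemma slfN x : D x -> f (- x) = - f x.
Proof. by move=> hx; have := slL h (-1) hx (sl0 h); rewrite addr0 !scaleN1r sl_f0 addr0. Qed.
Lemma slDB_inv x y : D x -> D (x - y) -> D y.
Proof. move=> hx hxy; have := slD h (-1) hxy hx; by rewrite scaleN1r opprB subrK. Qed.
Lemma slfB x y : D x -> D (x - y) -> f (x - y) = f x - f y.
Proof.
move=> hx hxy; have hy := slDB_inv hx hxy.
have := slfD hxy hy; rewrite subrK => ->; by rewrite addrK.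
Qed.
End Lin.

Lemma pairB (A B : zmodType) (a c : A) (b d : B) : (a, b) - (c, d) = (a - c, b - d).
Proof. by []. Qed.
Lemma pairN (A B : zmodType) (a : A) (b : B) : - (a, b) = (- a, - b).
Proof. by []. Qed.
Section Disc.
Variables (R : realType) (S : setting R).

Lemma iph_inner : is_inner (@iph R S).
Proof.
split.
- move=> x y; rewrite /iph (ip_sym (iph0_inner S)) (ip_sym (iph1_inner S)).
  by rewrite (ip_sym (iph2_inner S)) (ip_sym (iph3_inner S)).
- move=> a x y z; rewrite /iph /= (ip_linl (iph0_inner S)) (ip_linl (iph1_inner S)).
  rewrite (ip_linl (iph2_inner S)) (ip_linl (iph3_inner S)); ring.
- case=> [[[x0 x1] x2] x3] nx; rewrite /iph /=.
  have g0 := ip_ge0 (iph0_inner S) x0; have g1 := ip_ge0 (iph1_inner S) x1.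
  have g2 := ip_ge0 (iph2_inner S) x2; have g3 := ip_ge0 (iph3_inner S) x3.
  case: (eqVneq x0 0) => [e0|/(ip_pos (iph0_inner S)) p]; last lra.
  case: (eqVneq x1 0) => [e1|/(ip_pos (iph1_inner S)) p]; last lra.
  case: (eqVneq x2 0) => [e2|/(ip_pos (iph2_inner S)) p]; last lra.
  case: (eqVneq x3 0) => [e3|/(ip_pos (iph3_inner S)) p]; last lra.
  by move: nx; rewrite e0 e1 e2 e3 eqxx.
Qed.

Lemma normh_ge0 (v : Hsp S) : 0 <= normh v. Proof. exact: sqrtr_ge0. Qed.
Lemma iph_CS (x y : Hsp S) : `|iph x y| <= normh x * normh y.
Proof. exact: (ip_CS iph_inner). Qed.

Lemma dhB (x y : Hsp S) : dh (x - y) = dh x - dh y.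
Proof. by rewrite /dh /= !raddfB -[0 in LHS](subr0 0). Qed.
Lemma JopB (x y : Hsp S) : Jop (x - y) = Jop x - Jop y.
Proof.
rewrite /Jop; case: x => [[[a b] c] d]; case: y => [[[a' b'] c'] d'] /=.
by rewrite !pairB !opprB !opprK ![- _ + _]addrC.
Qed.
Lemma Jop0 : Jop (0 : Hsp S) = 0.
Proof. rewrite /Jop /= !oppr0; reflexivity. Qed.
Lemma Jop_dh (W : Hsp S) : Jop (dh W) = dh (- W.1.1.1, W.1.1.2, - W.1.2, W.2).
Proof. by rewrite /Jop /dh /= !raddfN. Qed.
Lemma dh_Jop (W : Hsp S) : dh (Jop W) = - Jop (dh W).
Proof. by rewrite /Jop /dh /= !raddfN !pairN !opprK oppr0. Qed.
Lemma iph_Jop (x y : Hsp S) : iph (Jop x) (Jop y) = iph x y.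
Proof.
rewrite /iph /Jop /= (ipNl (iph1_inner S)) (ipNr (iph1_inner S)).
by rewrite (ipNl (iph3_inner S)) (ipNr (iph3_inner S)) !opprK.
Qed.
Lemma normh_Jop (x : Hsp S) : normh (Jop x) = normh x.
Proof. by rewrite /normh iph_Jop. Qed.
Lemma normhN (x : Hsp S) : normh (- x) = normh x.
Proof. by rewrite /normh (ipNl iph_inner) (ipNr iph_inner) opprK. Qed.
Lemma norm1h_Jop (x : Hsp S) : norm1h (Jop x) = norm1h x.
Proof. by rewrite /norm1h dh_Jop normhN !normh_Jop. Qed.

Lemma LhB (V1 V2 W : Hsp S) : Lh (V1 - V2) W = Lh V1 W - Lh V2 W.
Proof. rewrite /Lh dhB JopB (ipBl iph_inner) (ipBl iph_inner); ring. Qed.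

Lemma Lh_harm (V W : Hsp S) : Harm_h V -> Lh V W = 0.
Proof.
case=> h1 h2; rewrite /Lh h1 Jop0 (ip0l iph_inner) Jop_dh h2; ring.
Qed.
Lemma norm1h_gt0 (W : Hsp S) : W != 0 -> 0 < norm1h W.
Proof.
move=> nW; rewrite /norm1h; have := normh_ge0 (dh W).
have : 0 < normh W by rewrite /normh sqrtr_gt0 (ip_pos iph_inner nW).
lra.
Qed.
Lemma norm1h_ge0 (W : Hsp S) : 0 <= norm1h W.
Proof. rewrite /norm1h; have := normh_ge0 (dh W); have := normh_ge0 W; lra. Qed.
Lemma normh_le1 (W : Hsp S) : normh W <= norm1h W.
Proof. rewrite /norm1h; have := normh_ge0 (dh W); lra. Qed.
Lemma normhd_le1 (W : Hsp S) : normh (dh W) <= norm1h W.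
Proof. rewrite /norm1h; have := normh_ge0 W; lra. Qed.
Lemma JopK (W : Hsp S) : Jop (Jop W) = W.
Proof. by case: W => [[[a b] c] d]; rewrite /Jop /= !opprK. Qed.
Lemma Jop_neq0 (W : Hsp S) : W != 0 -> Jop W != 0.
Proof. by apply: contra => /eqP e; rewrite -(JopK W) e Jop0. Qed.
End Disc.
Theorem lemma4p13 (R : realType) (S : setting R) (N : nat) (t : 'I_N.+1 -> R) (T : R)
  (TN : ('I_N.+1 -> Xsp S) -> Xsp S)
  (PX : Xsp S -> Xsp S) (Ph : Hsp S -> Hsp S)
  (U U' : R -> Xsp S) (Uh : Hsp S) (CL : R) :
  (0 < N)%N -> t ord0 = 0 -> t ord_max = T ->
  (forall i j : 'I_N.+1, (i < j)%N -> t i < t j) ->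
  (forall (a : R) (v w : 'I_N.+1 -> Xsp S),
      TN (fun m => a *: v m + w m) = a *: TN v + TN w) ->
  is_PH_X PX -> is_PH_h Ph ->
  C1_on T U U' ->
  (forall s, s \in `[0, T] ->
     DdX (U s) /\ DdstarX (U s) /\ U' s = Jop (dX (U s) + dstarX (U s))) ->
  DIh (U T) -> DIh (dX (U T)) -> DIh (dstarX (U T)) ->
  DIh (TN (fun m => U (t m))) -> DIh (PX (U (t ord_max))) ->
  DIh (TN (fun m => U (t m)) - U' (t ord_max)) ->
  (forall Vh : Hsp S, Lh (Uh - Ph Uh) Vh =
     iph (Ih (TN (fun m => U (t m))) - Ph (Ih (TN (fun m => U (t m))))) Vh) ->
  Ph Uh = Ih (PX (U (t ord_max))) ->
  0 < CL ->
  (forall Vh : Hsp S, perp_h Vh ->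
     CL * norm1h Vh <= sup [set Lh Vh W / norm1h W | W in [set W | perp_h W /\ W != 0]]) ->
  norm1h ((Ih (U T) - Uh) - Ph (Ih (U T) - Uh)) <=
    CL^-1 * (dualnorm (eps_h (U T)) +
             normh (Ih (TN (fun m => U (t m)) - U' (t ord_max)))).
Proof.
move=> N0 t0 tN tinc TNlin PXh Phh C1 Uprop DIu DIdu DIzu DIx DIpx DIxU LhHyp PhUh CL0 CLhyp.
rewrite tN in DIpx DIxU *.
have T0 : 0 <= T by rewrite -t0 -tN; apply/ltW/tinc.
have TT : T \in `[0, T] by rewrite in_itv /= T0 lexx.
have [[Du0 [Du1 Du2]] [_ U'e]] := Uprop T TT.
set x := TN (fun m => U (t m)) in DIx DIxU LhHyp *.
set u := U T in DIu DIdu DIzu Du0 Du1 Du2 U'e *.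
set z := dstarX u in DIzu U'e *.
case: DIu => a0 [a1 [a2 a3]].
case: DIdu => _ [b1 [b2 b3]].
case: DIzu => c0 [c1 [c2 c3]].
have Ie : Ih (x - U' T) = Ih x - Ih (U' T).
  case: DIx => x0 [x1 [x2 x3]]; case: DIxU => y0 [y1 [y2 y3]].
  rewrite /Ih /= (slfB (I0_lin S) x0 y0) (slfB (I1_lin S) x1 y1).
  by rewrite (slfB (I2_lin S) x2 y2) (slfB (I3_lin S) x3 y3) !pairB.
have key : forall W, Lh (Ih u) W = eps_h u (Jop W) + iph (Ih (U' T)) W.
  move=> W.
  rewrite /Lh /eps_h U'e /iph /Jop /dh /Ih /dX /=.
  rewrite -/z add0r (coch0 Du0 a0 b1) (coch1 Du1 a1 b2) (coch2 Du2 a2 b3).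
  rewrite (slfN (I1_lin S) (slDD (I1_lin S) b1 c1)) (slfD (I1_lin S) b1 c1).
  rewrite (slfN (I3_lin S) (slDD (I3_lin S) b3 c3)) (slfD (I3_lin S) b3 c3).
  rewrite (slfD (I2_lin S) b2 c2) !raddfN.
  rewrite (ip0l (iph0_inner S)) (ip0r (iph0_inner S)).
  rewrite !(ipNl (iph1_inner S)) !(ipNr (iph1_inner S)) !(ipDl (iph1_inner S)).
  rewrite !(ipNr (iph2_inner S)) !(ipDl (iph2_inner S)).
  rewrite !(ipNl (iph3_inner S)) !(ipNr (iph3_inner S)) !(ipDl (iph3_inner S)).
  lra.
set E := Ih u - Uh - Ph (Ih u - Uh).
set g := Ih (x - U' T) in Ie *.
have Eperp : perp_h E.
  move=> V hV; have [_ o] := Phh (Ih u - Uh); rewrite (ip_sym (iph_inner S)); exact: o.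
have LE : forall W, perp_h W -> Lh E W = eps_h u (Jop W) - iph g W.
  move=> W hW; rewrite /E LhB [Lh (Ph _) W]Lh_harm; last exact: (Phh _).1.
  rewrite LhB key.
  have h1 := LhHyp W.
  rewrite LhB [Lh (Ph _) W]Lh_harm in h1; last exact: (Phh _).1.
  rewrite (ipBl (iph_inner S)) (hW _ (Phh _).1) in h1.
  rewrite Ie (ipBl (iph_inner S)); lra.
have Dub : has_ubound [set `|eps_h u W| / norm1h W | W in [set W : Hsp S | W != 0]].
  exists (normh (Ih u) + normh (Ih z)) => r [W /= nW <-].
  rewrite ler_pdivrMr ?norm1h_gt0 // /eps_h -/z.
  have h1 := iph_CS (Ih u) (dh W); have h2 := iph_CS (Ih z) W.
  have h3 := ler_normB (iph (Ih u) (dh W)) (iph (Ih z) W).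
  have := normh_le1 W; have := normhd_le1 W; have := normh_ge0 (Ih u);
  have := normh_ge0 (Ih z); have := normh_ge0 W; have := normh_ge0 (dh W).
  nra.
have Dle : forall W, W != 0 -> `|eps_h u W| / norm1h W <= dualnorm (eps_h u).
  move=> W nW; rewrite /dualnorm; apply: (ub_le_sup Dub); by exists W.
have Dn0 : 0 <= dualnorm (eps_h u).
  case: (pselect (exists W : Hsp S, W != 0)) => [[W nW]|nex].
    apply: le_trans (Dle W nW); by rewrite divr_ge0 ?norm1h_ge0.
  rewrite /dualnorm.
  suff -> : [set `|eps_h u W| / norm1h W | W in [set W : Hsp S | W != 0]] = set0 by rewrite sup0.
  apply/seteqP; split=> r // [W nW _]; exfalso; apply: nex; by exists W.
have Aub : forall W, perp_h W /\ W != 0 -> Lh E W / norm1h W <= dualnorm (eps_h u) + normh g.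
  move=> W [pW nW]; rewrite ler_pdivrMr ?norm1h_gt0 // LE //.
  have h1 : eps_h u (Jop W) <= dualnorm (eps_h u) * norm1h W.
    have := Dle _ (Jop_neq0 nW); rewrite norm1h_Jop ler_pdivrMr ?norm1h_gt0 // => h.
    exact: le_trans (ler_norm _) h.
  have h2 : - iph g W <= normh g * norm1h W.
    apply: le_trans (ler_norm _) _; rewrite normrN; apply: le_trans (iph_CS g W) _.
    by apply: ler_wpM2l; [exact: normh_ge0 | exact: normh_le1].
  nra.
have supA : sup [set Lh E W / norm1h W | W in [set W | perp_h W /\ W != 0]]
    <= dualnorm (eps_h u) + normh g.
  case: (pselect ([set Lh E W / norm1h W | W in [set W | perp_h W /\ W != 0]] !=set0)) => [ne|e].
    apply: ge_sup ne _ => r [W hW <-]; exact: Aub.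
  suff -> : [set Lh E W / norm1h W | W in [set W | perp_h W /\ W != 0]] = set0.
    by rewrite sup0; have := normh_ge0 g; lra.
  apply/seteqP; split=> r // Ar; exfalso; apply: e; by exists r.
have h := le_trans (CLhyp E Eperp) supA.
have : CL^-1 * (CL * norm1h E) <= CL^-1 * (dualnorm (eps_h u) + normh g).
  by rewrite ler_pM2l ?invr_gt0.
by rewrite mulrA mulVf ?mul1r // gt_eqF.
Qed.
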